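(* Let $p$ be a prime, $M$ an $m'\times m$ matrix over $\mathbb{F}_p$, $1\le L\le p$ an integer, and $\mathbf{L}=(L_1,\dots,L_m)$ integers with $L\le L_i\le2L$. Then for every $\mathbf{b}\in\mathbb{Z}^{m'}$, $$|\{\mathbf{x}\in D_{\mathbf{L}}:M\mathbf{x}\equiv\mathbf{b}\pmod p\}|\ll_m|\{\mathbf{x}\in D_{\mathbf{L}}:M\mathbf{x}\equiv\mathbf{0}\pmod p\}|.$$
   Context: $D_{\mathbf{L}}=\prod_{i=1}^m\{x\in\mathbb{Z}:-L_i\le x\le L_i\}$. *)

(* Defs.v *)
From HB Require Import structures.
From mathcomp Require Import all_boot all_order all_algebra.
Set Implicit Arguments. Unset Strict Implicit. Unset Printing Implicit Defensive.
Import Order.TTheory GRing.Theory Num.Theory.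
Local Open Scope ring_scope.

(* The box D_L = prod_i {x in Z : -L_i <= x <= L_i} is enumerated by the
   finite type [box Ls] of dependent finite functions y with
   y i in {0, ..., 2 L_i}; the corresponding integer vector is
   x_i = y_i - L_i (a bijection onto D_L). *)
Definition box (m : nat) (Ls : 'I_m -> nat) :=
  {dffun forall i : 'I_m, 'I_((2 * Ls i).+1)%N}.

Definition boxZ (m : nat) (Ls : 'I_m -> nat) (y : box Ls) : 'cV[int]_m :=
  \col_i ((nat_of_ord (y i))%:Z - (Ls i)%:Z).

Definition modp_vec (p n : nat) (v : 'cV[int]_n) : 'cV['F_p]_n :=
  map_mx (fun z : int => z%:~R) v.

Definition DL_sols (p m' m : nat) (M : 'M['F_p]_(m', m)) (Ls : 'I_m -> nat)
    (b : 'cV[int]_m') : {set box Ls} :=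
  [set y : box Ls | M *m modp_vec p (boxZ y) == modp_vec p b].

(* Main.v *)
Require Import Defs.
From HB Require Import structures.
From mathcomp Require Import all_boot all_order all_algebra.
From mathcomp Require Import zify ring.
Import GRing.Theory.
Local Open Scope ring_scope.

Lemma modp_vecB (p n : nat) (u v : 'cV[int]_n) :
  modp_vec p (u - v) = modp_vec p u - modp_vec p v.
Proof. by apply/matrixP => i j; rewrite !mxE intrB. Qed.

Lemma modp_vec0 (p n : nat) : modp_vec p (0 : 'cV[int]_n) = 0.
Proof. by apply/matrixP => i j; rewrite !mxE. Qed.

Lemma block_bound (p m' m : nat) (M : 'M['F_p]_(m', m)) (Ls : 'I_m -> nat)
  (b : 'cV[int]_m') (A : {set box Ls}) (y0 : box Ls) :
  y0 \in A -> A \subset DL_sols M Ls b ->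
  (forall y, y \in A -> forall i, (y i <= Ls i)%N = (y0 i <= Ls i)%N) ->
  (#|A| <= #|DL_sols M Ls 0|)%N.
Proof.
move=> y0A AS Hbl.
pose f (y : box Ls) : box Ls :=
  @finfun _ (fun i => 'I_((2 * Ls i).+1)) (fun i => inord (y i + Ls i - y0 i)).
have Har : forall y, y \in A -> forall i,
    (y0 i <= y i + Ls i)%N /\ (y i + Ls i - y0 i < (2 * Ls i).+1)%N.
  move=> y yA i; have := Hbl y yA i; have := ltn_ord (y i); have := ltn_ord (y0 i).
  case: (leqP (y i) (Ls i)); case: (leqP (y0 i) (Ls i)) => //; lia.
have fval : forall y, y \in A -> forall i,
    nat_of_ord (f y i) = (y i + Ls i - y0 i)%N.
  by move=> y yA i; rewrite /f ffunE inordK //; case: (Har y yA i).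
rewrite -(card_in_imset (f := f)).
  apply: subset_leq_card; apply/subsetP => z /imsetP [y yA ->].
  have yS := subsetP AS y yA; have y0S := subsetP AS y0 y0A.
  move: yS y0S; rewrite !inE => /eqP Hy /eqP Hy0.
  have -> : boxZ (f y) = boxZ y - boxZ y0.
    apply/matrixP => i j; rewrite !mxE fval //.
    case: (Har y yA i) => H1 _; rewrite -subzn // PoszD; ring.
  by rewrite modp_vecB mulmxBr Hy Hy0 subrr modp_vec0.
move=> y y' yA y'A E; apply/ffunP => i; apply/val_inj => /=.
have := congr1 (fun g : box Ls => nat_of_ord (g i)) E => /=.
rewrite !fval //; case: (Har y yA i) => H1 _; case: (Har y' y'A i) => H2 _ H; change (nat_of_ord (y i) = nat_of_ord (y' i)); lia.
Qed.

Theorem lemma5p3 :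
  forall m : nat, exists C : nat,
  forall (p m' : nat) (M : 'M['F_p]_(m', m)) (L : nat) (Ls : 'I_m -> nat)
         (b : 'cV[int]_m'),
    prime p ->
    (1 <= L <= p)%N ->
    (forall i : 'I_m, L <= Ls i <= 2 * L)%N ->
    (#|DL_sols M Ls b| <= C * #|DL_sols M Ls 0|)%N.
Proof.
move=> m; exists (2 ^ m)%N => p m' M L Ls b _ _ _.
pose sig (y : box Ls) : {ffun 'I_m -> bool} := [ffun i => (y i <= Ls i)%N].
rewrite -sum1_card (partition_big sig predT) //=.
apply: (@leq_trans (\sum_(s : {ffun 'I_m -> bool}) #|DL_sols M Ls 0|)).
  apply: leq_sum => s _.
  rewrite (eq_bigl (fun y => y \in [set y in DL_sols M Ls b | sig y == s])); last first.
    by move=> y; rewrite inE.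
  rewrite sum1_card.
  case: (set_0Vmem [set y in DL_sols M Ls b | sig y == s]) => [-> | [y0 y0A]].
    by rewrite cards0.
  apply: (@block_bound _ _ _ M Ls b _ y0) => //.
    by apply/subsetP => y; rewrite inE => /andP [].
  move=> y yA i; move: yA y0A; rewrite !inE => /andP [_ /eqP <-] /andP [_ /eqP].
  by move/ffunP => /(_ i); rewrite !ffunE.
by rewrite sum_nat_const card_ffun card_bool card_ord.
Qed.
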